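(* Let $R$ be a pro-ring (object of $\operatorname{Pro}(\mathbf{Rng})$), let $K$ be a unital commutative ring (viewed as a constant pro-set), and suppose the unital commutative ring object $K$ acts on the ring object $R$ in $\operatorname{Pro}(\mathbf{Set})$, i.e. there is a morphism $K\times R\to R$, $(k,a)\mapsto ka$, in $\operatorname{Pro}(\mathbf{Set})$ which is biadditive and satisfies $(kk')a=k(k'a)$, $1a=a$, $k(ab)=(ka)b=a(kb)$ as equalities of morphisms in $\operatorname{Pro}(\mathbf{Set})$. Then $R$ is isomorphic in $\operatorname{Pro}(\mathbf{Rng})$ to a pro-$K$-algebra, i.e. a formal projective limit of an inverse system of (non-unital) $K$-algebras with $K$-linear transition maps, compatibly with the given action.
   Context: For a category $\mathcal C$, $\operatorname{Pro}(\mathcal C)$ is its pro-completion: objects are inverse systems, i.e. functors $X\colon \mathcal I_X^{op}\to\mathcal C$ with $\mathcal I_X$ a small filtered category, and $\operatorname{Hom}_{\operatorname{Pro}(\mathcal C)}(X,Y)=\varprojlim_{j\in\mathcal I_Y}\varinjlim_{i\in\mathcal I_X}\mathcal C(X_i,Y_j)$. $\mathbf{Rng}$ denotes non-unital associative rings; the canonical functor $\operatorname{Pro}(\mathbf{Rng})\to\mathrm{Rng}(\operatorname{Pro}(\mathbf{Set}))$ uses levelwise operations. *)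

(* Defs.v *)
(* A morphism is represented by a family of representatives (i(j), f_j : X_{i(j)} -> Y_j)
   compatible in the colimits; equality of morphisms is equality of the germs. *)
From HB Require Import structures.
From mathcomp Require Import all_boot all_algebra.
From Stdlib Require Import ClassicalEpsilon.
Set Implicit Arguments. Unset Strict Implicit. Unset Printing Implicit Defensive.
Import GRing.Theory.
Local Open Scope ring_scope.

Record FiltCat := {
  fc_ob :> Type;
  fc_hom : fc_ob -> fc_ob -> Type;
  fc_id : forall i, fc_hom i i;
  fc_comp : forall i j k, fc_hom j k -> fc_hom i j -> fc_hom i k;
  fc_compA : forall i j k l (f : fc_hom i j) (g : fc_hom j k) (h : fc_hom k l),
      fc_comp h (fc_comp g f) = fc_comp (fc_comp h g) f;
  fc_id_l : forall i j (f : fc_hom i j), fc_comp (fc_id j) f = f;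
  fc_id_r : forall i j (f : fc_hom i j), fc_comp f (fc_id i) = f;
  fc_nonempty : inhabited fc_ob;
  fc_cone : forall i j, inhabited {k : fc_ob & (fc_hom i k * fc_hom j k)%type};
  fc_coeq : forall i j (u v : fc_hom i j),
      exists k (w : fc_hom j k), fc_comp w u = fc_comp w v
}.

Record fam (I : FiltCat) := Fam {
  fX : I -> Type;
  fmap : forall i j, fc_hom i j -> fX j -> fX i }.
Arguments fX {I} f _.
Arguments fmap {I} f {i j} _ _.


Definition isFunctorFam (I : FiltCat) (F : fam I) : Prop :=
  (forall i x, fmap F (fc_id i) x = x) /\
  (forall i j k (u : fc_hom i j) (v : fc_hom j k) x,
      fmap F (fc_comp v u) x = fmap F u (fmap F v x)).

Record sys := Sys { sI : FiltCat; sF : fam sI }.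
Arguments Sys {sI} sF.
Definition sX {S : sys} (i : sI S) : Type := fX (sF S) i.
Definition smap (S : sys) (i j : sI S) (u : fc_hom i j) : sX j -> sX i :=
  fmap (sF S) u.
Arguments smap {S i j} u x.

Record proMap (X Y : sys) := ProMap {
  pm_idx : sI Y -> sI X;
  pm_fun : forall j, sX (pm_idx j) -> sX j }.
Arguments pm_idx {X Y} p j.
Arguments pm_fun {X Y} p j x.
Arguments ProMap : clear implicits.

(* equality of two elements (i,f), (i',f') of colim_i Set(X_i, T) *)
Definition germ_eq (X : sys) (T : Type) (i i' : sI X)
  (f : sX i -> T) (f' : sX i' -> T) : Prop :=
  exists k (u : fc_hom i k) (u' : fc_hom i' k),
    forall x : sX k, f (smap u x) = f' (smap u' x).

(* the family defines an element of lim_j colim_i Set(X_i, Y_j) *)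
Definition isProMor (X Y : sys) (f : proMap X Y) : Prop :=
  forall (j j' : sI Y) (v : fc_hom j j'),
    germ_eq (fun x => smap v (pm_fun f j' x)) (pm_fun f j).

Definition pro_eq (X Y : sys) (f g : proMap X Y) : Prop :=
  forall j : sI Y, germ_eq (pm_fun f j) (pm_fun g j).

Definition procomp (X Y Z : sys) (g : proMap Y Z) (f : proMap X Y) : proMap X Z :=
  ProMap X Z (fun k => pm_idx f (pm_idx g k))
             (fun k x => pm_fun g k (pm_fun f (pm_idx g k) x)).

Definition pid (X : sys) : proMap X X := ProMap X X (fun j => j) (fun j x => x).

Definition lw (I : FiltCat) (F G : fam I) (f : forall i, fX F i -> fX G i)
  : proMap (@Sys I F) (@Sys I G) :=
  ProMap (@Sys I F) (@Sys I G) (fun j => j) f.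

Definition famConst (I : FiltCat) (T : Type) : fam I :=
  @Fam I (fun _ => T) (fun _ _ _ x => x).
Definition famProd (I : FiltCat) (F G : fam I) : fam I :=
  @Fam I (fun i => (fX F i * fX G i)%type)
         (fun i j u x => (fmap F u x.1, fmap G u x.2)).

Definition pick (A : Type) (H : inhabited A) : A := epsilon H (fun _ => True).
Definition cone_pt (I : FiltCat) (i j : I) : {k : I & (fc_hom i k * fc_hom j k)%type} :=
  pick (fc_cone i j).

(* pairing <f,g> : Z -> F x G (the product of two systems over the same
   filtered index category is computed levelwise) *)
Definition ppair (Z : sys) (I : FiltCat) (F G : fam I)
  (f : proMap Z (@Sys I F)) (g : proMap Z (@Sys I G))
  : proMap Z (@Sys I (famProd F G)) :=
  ProMap Z (@Sys I (famProd F G))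
    (fun j => projT1 (cone_pt (pm_idx f j) (pm_idx g j)))
    (fun j (z : sX (projT1 (cone_pt (pm_idx f j) (pm_idx g j)))) =>
       (pm_fun f j (smap (fst (projT2 (cone_pt (pm_idx f j) (pm_idx g j)))) z),
        pm_fun g j (smap (snd (projT2 (cone_pt (pm_idx f j) (pm_idx g j)))) z))).

Definition prodK (T : Type) (I J : FiltCat) (F : fam I) (G : fam J)
  (f : proMap (@Sys I F) (@Sys J G))
  : proMap (@Sys I (famProd (famConst I T) F)) (@Sys J (famProd (famConst J T) G)) :=
  ProMap (@Sys I (famProd (famConst I T) F)) (@Sys J (famProd (famConst J T) G))
    (pm_idx f) (fun j x => (x.1, pm_fun f j x.2)).

Record rng := Rng {
  rcar :> zmodType;
  rmul : rcar -> rcar -> rcar;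
  rmulA : associative rmul;
  rmulDl : left_distributive rmul +%R;
  rmulDr : right_distributive rmul +%R }.

Record rhomP (A B : rng) (f : A -> B) : Prop := RHomP {
  rh_add : forall x y, f (x + y) = f x + f y;
  rh_mul : forall x y, f (rmul x y) = rmul (f x) (f y) }.

Record rhom (A B : rng) := RHom { rh_fun :> A -> B; rh_prop : rhomP rh_fun }.

Record kalg (K : comPzRingType) := KAlg {
  ka_rng :> rng;
  kscale : K -> ka_rng -> ka_rng;
  kscaleDl : forall k k' a, kscale (k + k') a = kscale k a + kscale k' a;
  kscaleDr : forall k a b, kscale k (a + b) = kscale k a + kscale k b;
  kscaleA : forall k k' a, kscale (k * k') a = kscale k (kscale k' a);
  kscale1 : forall a, kscale 1 a = a;
  kscale_mull : forall k a b, kscale k (rmul a b) = rmul (kscale k a) b;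
  kscale_mulr : forall k a b, kscale k (rmul a b) = rmul a (kscale k b) }.

Record proRng := ProRng {
  prI : FiltCat;
  prR : prI -> rng;
  prmap : forall i j, fc_hom i j -> rhom (prR j) (prR i);
  prmap_id : forall i x, prmap (fc_id i) x = x;
  prmap_comp : forall i j k (u : fc_hom i j) (v : fc_hom j k) x,
      prmap (fc_comp v u) x = prmap u (prmap v x) }.
Arguments prR : clear implicits.
Arguments prmap p {i j} _.

Definition rfam (R : proRng) : fam (prI R) :=
  @Fam (prI R) (fun i => (prR R i : Type)) (fun i j u x => prmap R u x).
Definition rsys (R : proRng) : sys := @Sys (prI R) (rfam R).

Definition isRngMor (R S : proRng) (f : proMap (rsys R) (rsys S)) : Prop :=
  isProMor f /\
  forall j, @rhomP (prR R (pm_idx f j)) (prR S j) (pm_fun f j).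

Record proKAlg (K : comPzRingType) := ProKAlg {
  paI : FiltCat;
  paA : paI -> kalg K;
  pamap : forall i j, fc_hom i j -> rhom (paA j) (paA i);
  pamap_lin : forall i j (u : fc_hom i j) k x,
      pamap u (kscale k x) = kscale k (pamap u x);
  pamap_id : forall i x, pamap (fc_id i) x = x;
  pamap_comp : forall i j k (u : fc_hom i j) (v : fc_hom j k) x,
      pamap (fc_comp v u) x = pamap u (pamap v x) }.
Arguments paA {K} p _.
Arguments pamap {K} p {i j} _.

Definition pa_rng (K : comPzRingType) (A : proKAlg K) : proRng :=
  @ProRng (paI A) (fun i => ka_rng (paA A i)) (fun i j u => pamap A u)
          (@pamap_id K A) (@pamap_comp K A).

Section Objects.
Variables (K : comPzRingType) (R : proRng).
Let I := prI R.
Definition fKR : fam I := famProd (famConst I K) (rfam R).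
Definition fKKR : fam I := famProd (famConst I K) fKR.
Definition fRR : fam I := famProd (rfam R) (rfam R).
Definition fKRR : fam I := famProd (famConst I K) fRR.

Definition addR : proMap (Sys fRR) (rsys R) :=
  @lw I fRR (rfam R) (fun i (x : (prR R i * prR R i)%type) => (x.1 + x.2 : prR R i)).
Definition mulR : proMap (Sys fRR) (rsys R) :=
  @lw I fRR (rfam R) (fun i (x : (prR R i * prR R i)%type) => (rmul x.1 x.2 : prR R i)).
Definition addK_id : proMap (Sys fKKR) (Sys fKR) :=
  @lw I fKKR fKR (fun i (x : (K * (K * prR R i))%type) => (x.1 + x.2.1, x.2.2)).
Definition mulK_id : proMap (Sys fKKR) (Sys fKR) :=
  @lw I fKKR fKR (fun i (x : (K * (K * prR R i))%type) => (x.1 * x.2.1, x.2.2)).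
Definition pKKR_13 : proMap (Sys fKKR) (Sys fKR) :=
  @lw I fKKR fKR (fun i (x : (K * (K * prR R i))%type) => (x.1, x.2.2)).
Definition pKKR_23 : proMap (Sys fKKR) (Sys fKR) :=
  @lw I fKKR fKR (fun i (x : (K * (K * prR R i))%type) => x.2).
Definition pKRR_12 : proMap (Sys fKRR) (Sys fKR) :=
  @lw I fKRR fKR (fun i (x : (K * (prR R i * prR R i))%type) => (x.1, x.2.1)).
Definition pKRR_13 : proMap (Sys fKRR) (Sys fKR) :=
  @lw I fKRR fKR (fun i (x : (K * (prR R i * prR R i))%type) => (x.1, x.2.2)).
Definition pKRR_2 : proMap (Sys fKRR) (rsys R) :=
  @lw I fKRR (rfam R) (fun i (x : (K * (prR R i * prR R i))%type) => x.2.1).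
Definition pKRR_3 : proMap (Sys fKRR) (rsys R) :=
  @lw I fKRR (rfam R) (fun i (x : (K * (prR R i * prR R i))%type) => x.2.2).
Definition one_id : proMap (rsys R) (Sys fKR) :=
  @lw I (rfam R) fKR (fun i (a : prR R i) => ((1 : K), a)).
End Objects.

Definition isAction (K : comPzRingType) (R : proRng)
  (act : proMap (Sys (fKR K R)) (rsys R)) : Prop :=
  isProMor act /\
    pro_eq (procomp act (addK_id K R))
           (procomp (addR R) (ppair (procomp act (pKKR_13 K R)) (procomp act (pKKR_23 K R)))) /\
    pro_eq (procomp act (prodK K (addR R)))
           (procomp (addR R) (ppair (procomp act (pKRR_12 K R)) (procomp act (pKRR_13 K R)))) /\
    pro_eq (procomp act (mulK_id K R)) (procomp act (prodK K act)) /\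
    pro_eq (procomp act (one_id K R)) (pid (rsys R)) /\
    pro_eq (procomp act (prodK K (mulR R)))
           (procomp (mulR R) (ppair (procomp act (pKRR_12 K R)) (pKRR_3 K R))) /\
    pro_eq (procomp act (prodK K (mulR R)))
           (procomp (mulR R) (ppair (pKRR_2 K R) (procomp act (pKRR_13 K R)))).

Definition actA (K : comPzRingType) (A : proKAlg K)
  : proMap (Sys (fKR K (pa_rng A))) (rsys (pa_rng A)) :=
  @lw (paI A) (fKR K (pa_rng A)) (rfam (pa_rng A))
      (fun i (x : (K * paA A i)%type) => (kscale x.1 x.2 : prR (pa_rng A) i)).

(* Main.v *)
Require Import Defs.
From HB Require Import structures.
From mathcomp Require Import all_boot all_algebra.
From Stdlib Require Import ClassicalEpsilon ProofIrrelevance FunctionalExtensionality.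
From mathcomp Require Import boolp.
Set Implicit Arguments. Unset Strict Implicit. Unset Printing Implicit Defensive.
Import GRing.Theory.
Local Open Scope ring_scope.

Lemma span (I : FiltCat) (a c1 c2 : I) (f1 : fc_hom a c1) (f2 : fc_hom a c2) :
  exists d (g1 : fc_hom c1 d) (g2 : fc_hom c2 d), fc_comp g1 f1 = fc_comp g2 f2.
Proof.
case: (fc_cone c1 c2) => [[k [p1 p2]]].
case: (fc_coeq (fc_comp p1 f1) (fc_comp p2 f2)) => k' [w Hw].
exists k', (fc_comp w p1), (fc_comp w p2).
by rewrite -!fc_compA.
Qed.

Lemma rmul0l (A : rng) (b : A) : rmul 0 b = 0.
Proof. have h := rmulDl 0 0 b; rewrite addr0 in h. by apply: (addrI (rmul 0 b)); rewrite -h addr0. Qed.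
Lemma rmul0r (A : rng) (b : A) : rmul b 0 = 0.
Proof. have h := rmulDr b 0 0; rewrite addr0 in h. by apply: (addrI (rmul b 0)); rewrite -h addr0. Qed.
Lemma rmul_suml (A : rng) (T : Type) (l : seq T) (F : T -> A) b :
  rmul (\sum_(x <- l) F x) b = \sum_(x <- l) rmul (F x) b.
Proof. elim: l => [|x l IH]; first by rewrite !big_nil rmul0l. by rewrite !big_cons rmulDl IH. Qed.
Lemma rmul_sumr (A : rng) (T : Type) (l : seq T) (F : T -> A) b :
  rmul b (\sum_(x <- l) F x) = \sum_(x <- l) rmul b (F x).
Proof. elim: l => [|x l IH]; first by rewrite !big_nil rmul0r. by rewrite !big_cons rmulDr IH. Qed.
Lemma add_sum (A B : zmodType) (T : Type) (l : seq T) (f : A -> B) (F : T -> A) :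
  (forall x y, f (x + y) = f x + f y) ->
  f (\sum_(x <- l) F x) = \sum_(x <- l) f (F x).
Proof.
move=> Hf; have f0 : f 0 = 0.
  by have h := Hf 0 0; rewrite addr0 in h; apply: (addrI (f 0)); rewrite -h addr0.
elim: l => [|x l IH]; first by rewrite !big_nil f0. by rewrite !big_cons Hf IH.
Qed.

Section S.
Variables (K : comPzRingType) (R : proRng) (act : proMap (Sys (fKR K R)) (rsys R)).
Hypothesis Hact : isAction act.

Notation I := (prI R).
Notation hom := (@fc_hom (prI R)).
Definition al (j : I) : I := pm_idx act j.
Definition ac (j : I) (c : K) (x : prR R (al j)) : prR R j := pm_fun act j (c, x).
Arguments ac : clear implicits.
Definition fm (i j : I) (u : hom i j) (x : prR R j) : prR R i := prmap R u x.

Lemma fm_comp i j k (u : hom i j) (v : hom j k) x : fm (fc_comp v u) x = fm u (fm v x).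
Proof. exact: prmap_comp. Qed.
Lemma fm_id i x : fm (fc_id i) x = x.
Proof. exact: prmap_id. Qed.
Lemma fmD i j (u : hom i j) x y : fm u (x + y) = fm u x + fm u y.
Proof. exact: (rh_add (rh_prop (prmap R u))). Qed.
Lemma fmM i j (u : hom i j) x y : fm u (rmul x y) = rmul (fm u x) (fm u y).
Proof. exact: (rh_mul (rh_prop (prmap R u))). Qed.

Lemma coeqF a b (u v : hom a b) : exists c (z : hom b c), forall y, fm u (fm z y) = fm v (fm z y).
Proof.
case: (fc_coeq u v) => c [z Hz]; exists c, z => y.
by rewrite -!fm_comp Hz.
Qed.

Lemma F_add_r j : exists i (t : hom (al j) i), forall c r s,
  ac j c (fm t (r + s)) = ac j c (fm t r) + ac j c (fm t s).
Proof.
case: Hact => _ [_ [Har _]].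
case: (Har j) => k [u [u' E]].
pose q := projT2 (cone_pt (al j) (al j)).
case: (coeqF u (fc_comp u' q.1)) => k1 [z1 Hz1].
case: (coeqF (fc_comp z1 u) (fc_comp z1 (fc_comp u' q.2))) => k2 [z2 Hz2].
exists k2, (fc_comp z2 (fc_comp z1 u)) => c r s.
have := E (c, (fm z1 (fm z2 r), fm z1 (fm z2 s))).
rewrite /= -/(fm _ _) -/(fm _ _) -/(fm _ _) -/(fm _ _) -fmD /ac => E'.
rewrite !fm_comp (fmD z2) (fmD z1) E'.
congr (_ + _); congr (pm_fun act j (c, _)).
- by rewrite Hz1 fm_comp.
- by move: (Hz2 s); rewrite !fm_comp.
Qed.

Lemma F_add_l j : exists i (t : hom (al j) i), forall c d r,
  ac j (c + d) (fm t r) = ac j c (fm t r) + ac j d (fm t r).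
Proof.
case: Hact => _ [Hal _].
case: (Hal j) => k [u [u' E]].
pose q := projT2 (cone_pt (al j) (al j)).
case: (coeqF u (fc_comp u' q.1)) => k1 [z1 Hz1].
case: (coeqF (fc_comp z1 u) (fc_comp z1 (fc_comp u' q.2))) => k2 [z2 Hz2].
exists k2, (fc_comp z2 (fc_comp z1 u)) => c d r.
have := E (c, (d, fm z1 (fm z2 r))).
rewrite /= -/(fm _ _) -/(fm _ _) -/(fm _ _) /ac => E'.
rewrite !fm_comp E'.
congr (_ + _); congr (pm_fun act j (_, _)).
- by rewrite Hz1 fm_comp.
- by move: (Hz2 r); rewrite !fm_comp.
Qed.

Lemma F_one j : exists i (t : hom (al j) i) (tau : hom j i), forall x,
  ac j 1 (fm t x) = fm tau x.
Proof.
case: Hact => _ [_ [_ [_ [Ho _]]]].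
case: (Ho j) => k [u [u' E]].
by exists k, u, u' => x; have := E x.
Qed.

Lemma F_mull j : exists b (s : hom (al j) b) (tau : hom j b), forall c a e,
  ac j c (fm s (rmul a e)) = rmul (ac j c (fm s a)) (fm tau e).
Proof.
case: Hact => _ [_ [_ [_ [_ [Hml _]]]]].
case: (Hml j) => k [u [u' E]].
pose q := projT2 (cone_pt (al j) j).
case: (coeqF u (fc_comp u' q.1)) => k1 [z1 Hz1].
exists k1, (fc_comp z1 u), (fc_comp z1 (fc_comp u' q.2)) => c a e.
have := E (c, (fm z1 a, fm z1 e)).
rewrite /= -/(fm _ _) -/(fm _ _) -/(fm _ _) -/(fm _ _) -/(fm _ _) -fmM /ac => E'.
rewrite !fm_comp fmM E'.
congr (rmul (pm_fun act j (_, _)) _).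
by rewrite Hz1 fm_comp.
Qed.

Lemma F_mulr j : exists b (s : hom (al j) b) (tau : hom j b), forall c a e,
  ac j c (fm s (rmul a e)) = rmul (fm tau a) (ac j c (fm s e)).
Proof.
case: Hact => _ [_ [_ [_ [_ [_ Hmr]]]]].
case: (Hmr j) => k [u [u' E]].
pose q := projT2 (cone_pt j (al j)).
case: (coeqF u (fc_comp u' q.2)) => k1 [z1 Hz1].
exists k1, (fc_comp z1 u), (fc_comp z1 (fc_comp u' q.1)) => c a e.
have := E (c, (fm z1 a, fm z1 e)).
rewrite /= -/(fm _ _) -/(fm _ _) -/(fm _ _) -/(fm _ _) -/(fm _ _) -fmM /ac => E'.
rewrite !fm_comp fmM E'.
congr (rmul _ (pm_fun act j (_, _))).
by rewrite Hz1 fm_comp.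
Qed.

Lemma F_assoc j : exists b (s : hom (al j) b) (s' : hom (al (al j)) b), forall c d a,
  ac j (c * d) (fm s a) = ac j c (ac (al j) d (fm s' a)).
Proof.
case: Hact => _ [_ [_ [Has _]]].
case: (Has j) => k [u [u' E]].
by exists k, u, u' => c d a; have := E (c, (d, a)).
Qed.

Lemma F_compat j j' (v : hom j j') : exists b (u : hom (al j') b) (u' : hom (al j) b),
  forall c x, fm v (ac j' c (fm u x)) = ac j c (fm u' x).
Proof.
case: Hact => Hm _.
case: (Hm j j' v) => k [u [u' E]].
by exists k, u, u' => c x; have := E (c, x).
Qed.

Lemma spanF a c1 c2 (f1 : hom a c1) (f2 : hom a c2) :
  exists d (g1 : hom c1 d) (g2 : hom c2 d), forall y, fm f1 (fm g1 y) = fm f2 (fm g2 y).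
Proof.
case: (span f1 f2) => d [g1 [g2 Hg]]; exists d, g1, g2 => y.
by rewrite -!fm_comp Hg.
Qed.

Definition EE j i (t : hom (al j) i) c r := ac j c (fm t r).
Definition P1 j i (t : hom (al j) i) := forall c r s, EE t c (r + s) = EE t c r + EE t c s.
Definition P2 j i (t : hom (al j) i) := forall c d r, EE t (c + d) r = EE t c r + EE t d r.
Definition P3 j i (t : hom (al j) i) := forall c d r s, rmul (EE t c r) (EE t d s) = EE t (c * d) (rmul r s).
Definition P4 j i (t : hom (al j) i) := exists tau : hom j i, forall x, EE t 1 x = fm tau x.
Definition good j i (t : hom (al j) i) := [/\ P1 t, P2 t, P3 t & P4 t].

Definition up j (P : forall i, hom (al j) i -> Prop) :=
  forall i (t : hom (al j) i) i' (w : hom i i'), P i t -> P i' (fc_comp w t).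

Lemma EE_comp j i i' (t : hom (al j) i) (w : hom i i') c r :
  EE (fc_comp w t) c r = EE t c (fm w r).
Proof. by rewrite /EE fm_comp. Qed.

Lemma up1 j : up (@P1 j).
Proof. by move=> i t i' w H c r s; rewrite !EE_comp fmD H. Qed.
Lemma up2 j : up (@P2 j).
Proof. by move=> i t i' w H c d r; rewrite !EE_comp H. Qed.
Lemma up3 j : up (@P3 j).
Proof. by move=> i t i' w H c d r s; rewrite !EE_comp fmM H. Qed.
Lemma up4 j : up (@P4 j).
Proof.
move=> i t i' w [tau H]; exists (fc_comp w tau) => x.
by rewrite EE_comp H fm_comp.
Qed.
Lemma up_good j : up (@good j).
Proof. move=> i t i' w [H1 H2 H3 H4]; split; [exact: up1|exact: up2|exact: up3|exact: up4]. Qed.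

Lemma ev_and j (P Q : forall i, hom (al j) i -> Prop) : up P -> up Q ->
  (exists i t, P i t) -> (exists i t, Q i t) -> exists i t, P i t /\ Q i t.
Proof.
move=> uP uQ [i1 [t1 H1]] [i2 [t2 H2]].
case: (span t1 t2) => d [g1 [g2 Hg]].
exists d, (fc_comp g1 t1); split; first exact: uP.
by rewrite Hg; apply: uQ.
Qed.

Lemma ex3 j : exists i (t : hom (al j) i), P3 t.
Proof.
case: (F_mull j) => b1 [s1 [t1 M1]].
case: (F_compat t1) => b2 [u2 [u2' C2]].
case: (F_mulr b1) => b3 [s3 [t3 M3]].
case: (F_compat s1) => b4 [u4 [u4' C4]].
case: (F_assoc j) => b5 [s5 [s5' A5]].
case: (spanF (fc_comp t3 s1) u2') => d1 [g3 [g2 HA]].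
case: (coeqF (fc_comp g2 u2) (fc_comp g3 s3)) => d2 [z1 HB].
case: (spanF (fc_comp z1 (fc_comp g3 s3)) u4) => d3 [h [g4 HC]].
case: (spanF (fc_comp g4 u4') s5') => d4 [h2 [g5 HD]].
case: (coeqF (fc_comp h2 (fc_comp h (fc_comp z1 (fc_comp g3 (fc_comp t3 s1))))) (fc_comp g5 s5)) => i [z2 HE].
exists i, (fc_comp z2 (fc_comp h2 (fc_comp h (fc_comp z1 (fc_comp g3 (fc_comp t3 s1)))))).
move=> c d r s; rewrite /EE !fm_comp.
move: HA HB HC HD HE; rewrite /= => HA HB HC HD HE.
set Y := fm z1 (fm h (fm h2 (fm z2 s))).
have -> : fm s1 (fm t3 (fm g3 Y)) = fm u2' (fm g2 Y) by move: (HA Y); rewrite fm_comp.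
rewrite -C2.
have -> : fm u2 (fm g2 Y) = fm s3 (fm g3 Y) by move: (HB (fm h (fm h2 (fm z2 s)))); rewrite !fm_comp.
rewrite -M1 -M3.
have -> : rmul (fm g3 (fm z1 (fm h (fm h2 (fm z2 r))))) (fm g3 Y) =
   fm g3 (fm z1 (fm h (fm h2 (fm z2 (rmul r s))))) by rewrite !fmM.
have -> : fm s3 (fm g3 (fm z1 (fm h (fm h2 (fm z2 (rmul r s)))))) = fm u4 (fm g4 (fm h2 (fm z2 (rmul r s)))).
  by move: (HC (fm h2 (fm z2 (rmul r s)))); rewrite !fm_comp.
rewrite C4.
have -> : fm u4' (fm g4 (fm h2 (fm z2 (rmul r s)))) = fm s5' (fm g5 (fm z2 (rmul r s))).
  by move: (HD (fm z2 (rmul r s))); rewrite !fm_comp.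
rewrite -A5.
by move: (HE (rmul r s)); rewrite !fm_comp => ->.
Qed.

Lemma good_ex j : exists i (t : hom (al j) i), good t.
Proof.
have h12 := ev_and (@up1 j) (@up2 j).
have h34 := ev_and (@up3 j) (@up4 j).
have u12 : up (fun i (t : hom (al j) i) => P1 t /\ P2 t).
  by move=> i t i' w [? ?]; split; [exact: up1|exact: up2].
have u34 : up (fun i (t : hom (al j) i) => P3 t /\ P4 t).
  by move=> i t i' w [? ?]; split; [exact: up3|exact: up4].
case: (ev_and u12 u34 (h12 (F_add_r j) (F_add_l j)) (h34 (ex3 j) _)).
  case: (F_one j) => i [t [tau H]]; exists i, t, tau => x; exact: H.
by move=> i [t [[H1 H2] [H3 H4]]]; exists i, t.
Qed.

Lemma G6 j i (t : hom (al j) i) : exists b (s : hom (al i) b) (rho : hom i b),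
  forall k c r, ac j k (fm t (ac i c (fm s r))) = ac j (k * c) (fm t (fm rho r)).
Proof.
case: (F_compat t) => b1 [u1 [u1' C1]].
case: (F_assoc j) => b5 [s5 [s5' A5]].
case: (spanF u1' s5') => d [g1 [g5 H1]].
case: (spanF t (fc_comp g5 s5)) => d' [rho [z H2]].
exists d', (fc_comp z (fc_comp g1 u1)), rho => k c r.
rewrite !fm_comp C1 H1 -A5.
by move: (H2 r); rewrite fm_comp => ->.
Qed.

Lemma lift j i (t : hom (al j) i) j' (z : hom j j') : exists i' (t' : hom (al j') i'),
  good t' /\ exists w : hom i i', forall c r, fm z (ac j' c (fm t' r)) = ac j c (fm t (fm w r)).
Proof.
case: (good_ex j') => i0 [t0 G0].
case: (F_compat z) => b [u [u' C]].
case: (spanF t0 u) => d [g1 [g2 H1]].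
case: (spanF t (fc_comp g2 u')) => d' [w [h H2]].
exists d', (fc_comp h (fc_comp g1 t0)); split.
  by apply: up_good; apply: up_good.
exists w => c r.
rewrite !fm_comp H1 C.
by move: (H2 r); rewrite fm_comp => ->.
Qed.

Record PObj := PO { pj : I; pi : I; pt : hom (al pj) pi; pg : good pt }.

Definition rep (p : PObj) (g : K -> prR R (pj p)) :=
  exists l : seq (K * prR R (pi p)), g = fun k => \sum_(x <- l) EE (pt p) (k * x.1) x.2.

Arguments rep : clear implicits.
Definition carr (p : PObj) := {g : K -> prR R (pj p) | rep p g}.


Lemma EE_sum j i (t : hom (al j) i) c T (l : seq T) F : P1 t ->
  EE t c (\sum_(x <- l) F x) = \sum_(x <- l) EE t c (F x).
Proof. move=> H; apply: (@add_sum (rcar (prR R i)) (rcar (prR R j)) T l (EE t c) F) => x y; exact: H. Qed.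
Lemma EEN j i (t : hom (al j) i) c r : P1 t -> EE t c (- r) = - EE t c r.
Proof.
move=> H; apply: (addrI (EE t c r)); rewrite -H !subrr.
by have h := H c 0 0; rewrite addr0 in h; apply: (addrI (EE t c 0)); rewrite -h addr0.
Qed.
Lemma fm_sum i j (u : hom i j) T (l : seq T) F :
  fm u (\sum_(x <- l) F x) = \sum_(x <- l) fm u (F x).
Proof. apply: (@add_sum (rcar (prR R j)) (rcar (prR R i)) T l (@fm i j u) F) => x y; exact: fmD. Qed.

Section Carr.
Variable p : PObj.
HB.instance Definition _ := gen_eqMixin (carr p).
HB.instance Definition _ := gen_choiceMixin (carr p).

Lemma sigE (a b : carr p) : proj1_sig a = proj1_sig b -> a = b.
Proof. case: a b => [a Ha] [b Hb] /= E; subst b; congr exist; exact: proof_irrelevance. Qed.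

Let G1 : P1 (pt p). Proof. by case: (pg p). Qed.
Let G2 : P2 (pt p). Proof. by case: (pg p). Qed.
Let G3 : P3 (pt p). Proof. by case: (pg p). Qed.

Lemma rep0 : rep p (fun _ : K => (0 : prR R (pj p))).
Proof. by exists [::]; apply: functional_extensionality => k; rewrite big_nil. Qed.
Lemma repD g h : rep p g -> rep p h -> rep p (fun k => g k + h k).
Proof.
move=> [l1 ->] [l2 ->]; exists (l1 ++ l2); apply: functional_extensionality => k.
by rewrite big_cat.
Qed.
Lemma repN g : rep p g -> rep p (fun k => - g k).
Proof.
move=> [l ->]; exists [seq (x.1, - x.2) | x <- l]; apply: functional_extensionality => k.
rewrite big_map -sumrN; apply: eq_bigr => x _; by rewrite EEN.
Qed.
Lemma repZ c g : rep p g -> rep p (fun k => g (k * c)).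
Proof.
move=> [l ->]; exists [seq (c * x.1, x.2) | x <- l]; apply: functional_extensionality => k.
by rewrite big_map; apply: eq_bigr => x _ /=; rewrite mulrA.
Qed.
Lemma rep_mul2 (g h : K -> prR R (pj p)) : rep p g -> rep p h -> exists F : K -> prR R (pj p),
   forall a b, rmul (g a) (h b) = F (a * b).
Proof.
move=> [l1 ->] [l2 ->].
exists (fun m => \sum_(x <- l1) \sum_(y <- l2) EE (pt p) (m * (x.1 * y.1)) (rmul x.2 y.2)) => a' b'.
rewrite rmul_suml; apply: eq_bigr => x _; rewrite rmul_sumr; apply: eq_bigr => y _.
rewrite G3; congr EE; rewrite !mulrA; congr (_ * _); rewrite -!mulrA; congr (_ * _); exact: mulrC.
Qed.
Lemma repM g h : rep p g -> rep p h -> rep p (fun k => rmul (g k) (h 1)).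
Proof.
move=> [l1 ->] [l2 ->].
exists [seq (x.1 * y.1, rmul x.2 y.2) | x <- l1, y <- l2]; apply: functional_extensionality => k.
rewrite big_allpairs_dep rmul_suml; apply: eq_bigr => x _; rewrite rmul_sumr; apply: eq_bigr => y _.
by rewrite G3 /= mul1r mulrA.
Qed.
Lemma repDk g a b : rep p g -> g (a + b) = g a + g b.
Proof. by move=> [l ->]; rewrite -big_split; apply: eq_bigr => x _; rewrite mulrDl G2. Qed.

Definition c0 : carr p := exist _ _ rep0.
Definition cadd (a b : carr p) : carr p := exist _ _ (repD (proj2_sig a) (proj2_sig b)).
Definition copp (a : carr p) : carr p := exist _ _ (repN (proj2_sig a)).
Definition cmul (a b : carr p) : carr p := exist _ _ (repM (proj2_sig a) (proj2_sig b)).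
Definition cscale (c : K) (a : carr p) : carr p := exist _ _ (repZ c (proj2_sig a)).

Lemma caddA : associative cadd.
Proof. by move=> a b c; apply: sigE; apply: functional_extensionality => k /=; rewrite addrA. Qed.
Lemma caddC : commutative cadd.
Proof. by move=> a b; apply: sigE; apply: functional_extensionality => k /=; rewrite addrC. Qed.
Lemma cadd0 : left_id c0 cadd.
Proof. by move=> a; apply: sigE; apply: functional_extensionality => k /=; rewrite add0r. Qed.
Lemma caddN : left_inverse c0 copp cadd.
Proof. by move=> a; apply: sigE; apply: functional_extensionality => k /=; rewrite addNr. Qed.

HB.instance Definition _ := GRing.isZmodule.Build (carr p) caddA caddC cadd0 caddN.

Lemma cmulA : associative cmul.
Proof. by move=> a b c; apply: sigE; apply: functional_extensionality => k /=; rewrite rmulA. Qed.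
Lemma cmulDl : left_distributive cmul +%R.
Proof. by move=> a b c; apply: sigE; apply: functional_extensionality => k /=; rewrite rmulDl. Qed.
Lemma cmulDr : right_distributive cmul +%R.
Proof. by move=> a b c; apply: sigE; apply: functional_extensionality => k /=; rewrite rmulDr. Qed.

Definition Rp : rng := @Rng (carr p) cmul cmulA cmulDl cmulDr.
Definition cscaleR (c : K) (a : Rp) : Rp := cscale c a.

Lemma cscaleDl k k' (a : Rp) : cscaleR (k + k') a = cscaleR k a + cscaleR k' a.
Proof. apply: sigE; apply: functional_extensionality => x /=; rewrite mulrDr; exact: repDk (proj2_sig a). Qed.
Lemma cscaleDr k (a b : Rp) : cscaleR k (a + b) = cscaleR k a + cscaleR k b.
Proof. by apply: sigE; apply: functional_extensionality => x. Qed.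
Lemma cscaleA k k' (a : Rp) : cscaleR (k * k') a = cscaleR k (cscaleR k' a).
Proof. by apply: sigE; apply: functional_extensionality => x /=; rewrite mulrA. Qed.
Lemma cscale1 (a : Rp) : cscaleR 1 a = a.
Proof. by apply: sigE; apply: functional_extensionality => x /=; rewrite mulr1. Qed.
Lemma cscale_mull k (a b : Rp) : cscaleR k (rmul a b) = rmul (cscaleR k a) b.
Proof. by apply: sigE; apply: functional_extensionality => x. Qed.
Lemma cscale_mulr k (a b : Rp) : cscaleR k (rmul a b) = rmul a (cscaleR k b).
Proof.
apply: sigE; apply: functional_extensionality => x /=.
case: (rep_mul2 (proj2_sig a) (proj2_sig b)) => F HF.
by rewrite !HF mul1r mulr1.
Qed.

Definition KA : kalg K := @KAlg K Rp cscaleR cscaleDl cscaleDr cscaleA cscale1 cscale_mull cscale_mulr.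
End Carr.

Definition Mcond (p p' : PObj) (vw : hom (pj p) (pj p') * hom (pi p) (pi p')) :=
  forall c r, fm vw.1 (EE (pt p') c r) = EE (pt p) c (fm vw.2 r).
Arguments Mcond : clear implicits.
Definition Phom (p p' : PObj) := {vw | Mcond p p' vw}.

Lemma PhomE p p' (m m' : Phom p p') : proj1_sig m = proj1_sig m' -> m = m'.
Proof. case: m m' => [a Ha] [b Hb] /= E; subst b; congr exist; exact: proof_irrelevance. Qed.

Lemma Mid p : Mcond p p (fc_id _, fc_id _).
Proof. by move=> c r; rewrite /= !fm_id. Qed.
Definition Pid p : Phom p p := exist _ _ (@Mid p).
Lemma Mcomp p1 p2 p3 (g : Phom p2 p3) (f : Phom p1 p2) :
  Mcond p1 p3 (fc_comp (proj1_sig g).1 (proj1_sig f).1, fc_comp (proj1_sig g).2 (proj1_sig f).2).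
Proof.
case: g f => [[g1 g2] Hg] [[f1 f2] Hf] c r /=.
by rewrite !fm_comp (Hg c r) (Hf c).
Qed.
Definition Pcomp p1 p2 p3 (g : Phom p2 p3) (f : Phom p1 p2) : Phom p1 p3 := exist _ _ (Mcomp g f).

Lemma PcompA p1 p2 p3 p4 (f : Phom p1 p2) (g : Phom p2 p3) (h : Phom p3 p4) :
  Pcomp h (Pcomp g f) = Pcomp (Pcomp h g) f.
Proof. by apply: PhomE => /=; rewrite !fc_compA. Qed.
Lemma Pid_l p1 p2 (f : Phom p1 p2) : Pcomp (Pid p2) f = f.
Proof. by apply: PhomE => /=; rewrite !fc_id_l; case: (proj1_sig f). Qed.
Lemma Pid_r p1 p2 (f : Phom p1 p2) : Pcomp f (Pid p1) = f.
Proof. by apply: PhomE => /=; rewrite !fc_id_r; case: (proj1_sig f). Qed.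

Definition deep (p : PObj) i' (w : hom (pi p) i') : PObj :=
  PO (@up_good (pj p) (pi p) (pt p) i' w (pg p)).
Lemma deepM (p : PObj) i' (w : hom (pi p) i') : Mcond p (deep w) (fc_id _, w).
Proof. by move=> c r; rewrite /= fm_id EE_comp. Qed.
Definition deepH (p : PObj) i' (w : hom (pi p) i') : Phom p (deep w) := exist _ _ (@deepM p i' w).

Lemma liftP (q0 : PObj) j1 (z : hom (pj q0) j1) :
  exists i' (t' : hom (al j1) i') (G : good t') (n : Phom q0 (PO G)), (proj1_sig n).1 = z.
Proof.
case: (lift (pt q0) z) => i' [t' [G [w Hw]]].
have M : Mcond q0 (PO G) (z, w) by move=> c r; exact: Hw.
by exists i', t', G, (exist _ _ M).
Qed.

Lemma Pnonempty : inhabited PObj.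
Proof.
case: (fc_nonempty I) => j; case: (good_ex j) => i [t G]; exact: (inhabits (PO G)).
Qed.

Lemma Pcone (p p' : PObj) : inhabited {k : PObj & (Phom p k * Phom p' k)%type}.
Proof.
case: (fc_cone (pj p) (pj p')) => [[j3 [z1 z2]]].
case: (liftP z1) => i1 [t1 [G1 [n1 _]]].
case: (liftP z2) => i2 [t2 [G2 [n2 _]]].
case: (span t1 t2) => d [g1 [g2 Hg]].
pose q := deep (p := PO G1) g1.
have Mb : Mcond (PO G2) q (fc_id _, g2).
  by move=> c r; rewrite /= fm_id /q /deep /= Hg EE_comp.
constructor; exists q; split.
  exact: (Pcomp (deepH (p := PO G1) g1) n1).
exact: (Pcomp (exist (Mcond (PO G2) q) _ Mb) n2).
Qed.

Lemma Pcoeq (p p' : PObj) (u v : Phom p p') :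
  exists k (w : Phom p' k), Pcomp w u = Pcomp w v.
Proof.
case: (fc_coeq (proj1_sig u).1 (proj1_sig v).1) => j'' [z Hz].
case: (liftP z) => i'' [t'' [G [n Hn]]].
case: (fc_coeq (fc_comp (proj1_sig n).2 (proj1_sig u).2) (fc_comp (proj1_sig n).2 (proj1_sig v).2)) => i3 [y Hy].
exists (deep (p := PO G) y), (Pcomp (deepH (p := PO G) y) n).
apply: PhomE => /=; congr pair.
  by rewrite !fc_id_l Hn.
by rewrite -!fc_compA Hy.
Qed.

Definition Pcat : FiltCat :=
  @Build_FiltCat PObj Phom Pid Pcomp PcompA Pid_l Pid_r Pnonempty Pcone Pcoeq.

Lemma rep_trans (p p' : PObj) (m : Phom p p') (g : K -> prR R (pj p')) :
  rep p' g -> rep p (fun k => fm (proj1_sig m).1 (g k)).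
Proof.
case: m => [[v w] M] [l ->] /=; exists [seq (x.1, fm w x.2) | x <- l].
apply: functional_extensionality => k; rewrite fm_sum big_map.
by apply: eq_bigr => x _; rewrite M.
Qed.
Definition trans (p p' : PObj) (m : Phom p p') (g : carr p') : carr p :=
  exist _ _ (rep_trans m (proj2_sig g)).
Lemma trans_hom (p p' : PObj) (m : Phom p p') : rhomP (A := KA p') (B := KA p) (trans m).
Proof.
split => x y; apply: sigE; apply: functional_extensionality => k /=.
  exact: fmD.
exact: fmM.
Qed.
Definition transR (p p' : Pcat) (m : fc_hom p p') : rhom (KA p') (KA p) := RHom (trans_hom m).

Lemma transR_lin (p p' : Pcat) (m : fc_hom p p') k x :
  transR m (kscale k x) = kscale k (transR m x).
Proof. by apply: sigE; apply: functional_extensionality => y. Qed.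
Lemma transR_id (p : Pcat) x : transR (fc_id p) x = x.
Proof. by apply: sigE; apply: functional_extensionality => y /=; rewrite fm_id. Qed.
Lemma transR_comp (p1 p2 p3 : Pcat) (u : fc_hom p1 p2) (v : fc_hom p2 p3) x :
  transR (fc_comp v u) x = transR u (transR v x).
Proof. by apply: sigE; apply: functional_extensionality => y /=; rewrite fm_comp. Qed.

Definition AA : proKAlg K := @ProKAlg K Pcat KA transR transR_lin transR_id transR_comp.

Lemma rep_one (p : PObj) (r : prR R (pi p)) : rep p (fun k => EE (pt p) k r).
Proof.
exists [:: (1, r)]; apply: functional_extensionality => k.
by rewrite big_cons big_nil /= mulr1 addr0.
Qed.
Definition phiF (p : PObj) (r : prR R (pi p)) : carr p := exist _ _ (rep_one r).

Definition phi : proMap (rsys R) (rsys (pa_rng AA)) :=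
  ProMap (rsys R) (rsys (pa_rng AA)) (fun p : Pcat => pi p) (fun p r => @phiF p r).

Definition Pch (j : I) : PObj :=
  PO (proj2_sig (constructive_indefinite_description
        (proj2_sig (constructive_indefinite_description (good_ex j))))).

Definition psi : proMap (rsys (pa_rng AA)) (rsys R) :=
  ProMap (rsys (pa_rng AA)) (rsys R) (fun j => (Pch j : Pcat))
    (fun j (g : carr (Pch j)) => proj1_sig g 1).

Lemma phi_mor : isRngMor phi.
Proof.
split.
  move=> p p' m; exists (pi p'), (fc_id _), (proj1_sig m).2 => x.
  apply: sigE; apply: functional_extensionality => k /=.
  rewrite /smap /= prmap_id; exact: (proj2_sig m).
move=> p; case: (pg p) => H1 _ H3 _; split => x y; apply: sigE;
  apply: functional_extensionality => k /=.
  exact: H1.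
by rewrite [in RHS]H3 mulr1.
Qed.

Lemma psi_mor : isRngMor psi.
Proof.
split; last by move=> j; split.
move=> j j' v.
case: (Pcone (Pch j') (Pch j)) => [[q0 [a0 b0]]].
case: (fc_coeq (proj1_sig b0).1 (fc_comp (proj1_sig a0).1 v)) => j1 [z Hz].
case: (liftP z) => i' [t' [G [n Hn]]].
exists (PO G : Pcat), (Pcomp n a0), (Pcomp n b0) => g /=.
rewrite /smap /= -/(fm _ _) -fm_comp Hn -fc_compA -Hz.
by [].
Qed.

Lemma psiphi : pro_eq (procomp psi phi) (pid (rsys R)).
Proof.
move=> j; case: (pg (Pch j)) => _ _ _ [tau H4].
exists (pi (Pch j)), (fc_id _), tau => x /=.
by rewrite /smap /= prmap_id; exact: H4.
Qed.

Lemma phipsi : pro_eq (procomp phi psi) (pid (rsys (pa_rng AA))).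
Proof.
move=> p /=.
have [b0 [s [rho HG]]] := G6 (pt p).
pose q := Pch (pi p).
case: (Pcone q p) => [[o0 [a0 b0']]].
case: (spanF (fc_comp (proj1_sig a0).2 (pt q)) s) => d [g1 [g2 H1]].
case: (coeqF (fc_comp g1 (proj1_sig b0').2) (fc_comp g2 rho)) => d2 [z H2].
pose y := fc_comp z g1.
pose a := Pcomp (deepH (p := o0) y) a0.
pose b := Pcomp (deepH (p := o0) y) b0'.
exists (deep (p := o0) y : Pcat), a, b => h.
have Ma := proj2_sig a; have Mb := proj2_sig b.
apply: sigE; apply: functional_extensionality => k.
case: (proj2_sig h) => l Hl.
rewrite /= Hl.
case: (pg p) => G1 _ _ _.
rewrite -/(fm _ _) -/(fm _ _) !fm_sum EE_sum //.
apply: eq_bigr => x _.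
rewrite Ma Mb /EE mul1r.
have -> : fm (pt q) (fm (proj1_sig a).2 x.2) = fm s (fm g2 (fm z x.2)).
  by move: (H1 (fm z x.2)); rewrite /= !fm_comp.
rewrite HG.
have -> : fm (proj1_sig b).2 x.2 = fm rho (fm g2 (fm z x.2)).
  by move: (H2 x.2); rewrite /= !fm_comp.
by [].
Qed.

Lemma act_compat : pro_eq (procomp phi act) (procomp (actA AA) (prodK K phi)).
Proof.
move=> p.
have [b0 [s [rho HG]]] := G6 (pt p).
exists b0, s, rho => x.
apply: sigE; apply: functional_extensionality => k /=.
exact: HG.
Qed.
End S.

Theorem mainTheorem9 (K : comPzRingType) (R : proRng)
  (act : proMap (Sys (fKR K R)) (rsys R)) :
  isAction act ->
  exists (A : proKAlg K)
         (phi : proMap (rsys R) (rsys (pa_rng A)))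
         (psi : proMap (rsys (pa_rng A)) (rsys R)),
    [/\ isRngMor phi, isRngMor psi,
        pro_eq (procomp psi phi) (pid (rsys R)),
        pro_eq (procomp phi psi) (pid (rsys (pa_rng A))) &
        pro_eq (procomp phi act) (procomp (actA A) (prodK K phi))].
Proof.
move=> H.
exists (AA H), (phi H), (psi H); split.
- exact: phi_mor.
- exact: psi_mor.
- exact: psiphi.
- exact: phipsi.
- exact: act_compat.
Qed.
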